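(* Let $\mathbf C$ be a category of coframes. The forgetful functor $|\_|:\mathbf C^{\mathrm{conv}}\to\mathbf C$ is topological: every sink $(\varphi_i:|L_i|\to L)_{i\in I}$ (with $I$ any class, each $L_i$ a convergence $\mathbf C$-object, each $\varphi_i$ a $\mathbf C$-morphism) has a unique final lift, namely $(L,\lim_L)$ with $\lim_L\mathcal F=\bigwedge_{i\in I}\varphi_i(\lim_{L_i}\varphi_i^{-1}(\mathcal F))$ for $\mathcal F\in\mathbb F L$. The same holds for the restriction of $|\_|$ to the full subcategory $\mathbf C^{\mathrm{conv}}_{\mathrm{cl}}$ of classical convergence $\mathbf C$-objects.
   Context: A category of coframes has coframes (complete lattices in which arbitrary infima distribute over binary suprema) as objects and coframe morphisms (maps preserving arbitrary infima and finite suprema) as morphisms. A filter on $L$ is a non-empty upward-closed subset closed under binary meets ($L$ allowed); $\mathbb F L$ is the set of filters. A convergence $\mathbf C$-object is $(L,\lim_L)$ with $\lim_L:\mathbb F L\to L$ monotone (a convergence structure on $L$); morphisms of $\mathbf C^{\mathrm{conv}}$ are $\mathbf C$-morphisms $\varphi:L\to L'$ with $\lim_{L'}\mathcal F\le\varphi(\lim_L\varphi^{-1}(\mathcal F))$ for all $\mathcal F\in\mathbb F L'$ (continuity). $|\_|$ sends $(L,\lim_L)$ to $L$. A lift of the sink is a convergence structure on $L$ making every $\varphi_i$ continuous; it is final if for every $\mathbf C$-morphism $\psi:L\to|L'|$ with $L'$ a convergence $\mathbf C$-object, $\psi$ is continuous iff $\psi\circ\varphi_i$ is continuous for every $i$.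 $\mathcal C_L$ denotes the set of complemented elements of $L$; $(L,\lim_L)$ is classical if $\mathcal F\cap\mathcal C_L=\mathcal G\cap\mathcal C_L$ implies $\lim_L\mathcal F=\lim_L\mathcal G$. *)

(* Defs.v *)
Set Implicit Arguments.
Unset Strict Implicit.

Record coframe := Coframe {
  car :> Type;
  le : car -> car -> Prop;
  inf : (car -> Prop) -> car;
  sup2 : car -> car -> car;
  le_refl : forall x, le x x;
  le_trans : forall x y z, le x y -> le y z -> le x z;
  le_antisym : forall x y, le x y -> le y x -> x = y;
  inf_lb : forall (S : car -> Prop) x, S x -> le (inf S) x;
  inf_glb : forall (S : car -> Prop) y, (forall x, S x -> le y x) -> le y (inf S);
  sup2_ub_l : forall x y, le x (sup2 x y);
  sup2_ub_r : forall x y, le y (sup2 x y);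
  sup2_lub : forall x y z, le x z -> le y z -> le (sup2 x y) z;
  inf_sup2_distr : forall a (S : car -> Prop),
    sup2 a (inf S) = inf (fun y => exists s, S s /\ y = sup2 a s)
}.

Arguments le {c}.
Arguments inf {c}.
Arguments sup2 {c}.

Definition top (L : coframe) : L := inf (fun _ : L => False).
Definition bot (L : coframe) : L := inf (fun _ : L => True).
Definition meet2 (L : coframe) (a b : L) : L := inf (fun x => x = a \/ x = b).

Definition image (A B : Type) (f : A -> B) (S : A -> Prop) : B -> Prop :=
  fun y => exists x, S x /\ y = f x.

Definition is_cofrm_mor (L L' : coframe) (f : L -> L') : Prop :=
  (forall S : L -> Prop, f (inf S) = inf (image f S)) /\
  f (bot L) = bot L' /\
  (forall a b, f (sup2 a b) = sup2 (f a) (f b)).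

Record cofcat := CofCat {
  ob : coframe -> Prop;
  mor : forall L L' : coframe, (L -> L') -> Prop;
  mor_cofrm : forall (L L' : coframe) (f : L -> L'), mor f -> is_cofrm_mor f;
  mor_id : forall L : coframe, ob L -> mor (fun x : L => x);
  mor_comp : forall (L1 L2 L3 : coframe) (f : L1 -> L2) (g : L2 -> L3),
    mor f -> mor g -> mor (fun x => g (f x))
}.

Definition is_filter (L : coframe) (F : L -> Prop) : Prop :=
  (exists x, F x) /\
  (forall x y, F x -> le x y -> F y) /\
  (forall x y, F x -> F y -> F (meet2 x y)).

(* A convergence structure is represented by a map on subsets, of which only
   the values on filters are relevant; it must be monotone on filters. *)
Definition is_conv (L : coframe) (lim : (L -> Prop) -> L) : Prop :=
  forall F G : L -> Prop, is_filter F -> is_filter G ->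
    (forall x, F x -> G x) -> le (lim F) (lim G).

Definition preim (L L' : coframe) (f : L -> L') (F : L' -> Prop) : L -> Prop :=
  fun a => F (f a).

Definition continuous (L L' : coframe) (limL : (L -> Prop) -> L)
  (limL' : (L' -> Prop) -> L') (f : L -> L') : Prop :=
  forall F : L' -> Prop, is_filter F -> le (limL' F) (f (limL (preim f F))).

Arguments continuous {L L'} limL limL' f.
Arguments is_conv {L} lim.
Arguments preim {L L'} f F.

Definition complemented (L : coframe) (a : L) : Prop :=
  exists b, meet2 a b = bot L /\ sup2 a b = top L.

Arguments complemented {L} a.

Definition classical (L : coframe) (lim : (L -> Prop) -> L) : Prop :=
  forall F G : L -> Prop, is_filter F -> is_filter G ->
    (forall a, complemented a -> (F a <-> G a)) -> lim F = lim G.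

Section Sink.
Variables (L : coframe) (I : Type) (Li : I -> coframe)
  (limi : forall i, (Li i -> Prop) -> Li i) (phi : forall i, Li i -> L).

Definition is_lift (lim : (L -> Prop) -> L) : Prop :=
  is_conv lim /\ forall i : I, continuous (@limi i) lim (@phi i).

(* finality relative to the class of target convergence objects satisfying P
   (P = True for C^conv, P = classical for C^conv_cl) *)
Definition is_final (C : cofcat)
  (P : forall L' : coframe, ((L' -> Prop) -> L') -> Prop)
  (lim : (L -> Prop) -> L) : Prop :=
  forall (L' : coframe) (lim' : (L' -> Prop) -> L'),
    ob C L' -> is_conv lim' -> P L' lim' ->
    forall psi : L -> L', mor C psi ->
      (continuous lim lim' psi <->
       forall i : I, continuous (@limi i) lim' (fun x => psi (@phi i x))).

Definition final_lim (F : L -> Prop) : L :=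
  inf (fun x => exists i : I, x = @phi i (@limi i (preim (@phi i) F))).

End Sink.

Arguments classical {L} lim.
Arguments is_filter {L} F.

Definition trueP (L' : coframe) (lim' : (L' -> Prop) -> L') : Prop := True.

(* Main.v *)
Require Import Defs.
Set Implicit Arguments.
Unset Strict Implicit.

Lemma inf_ext (L : coframe) (S T : L -> Prop) :
  (forall x, S x <-> T x) -> inf S = inf T.
Proof.
  intros H. apply le_antisym; apply inf_glb; intros x Hx; apply inf_lb; apply H; exact Hx.
Qed.

Lemma mor_mono (L L' : coframe) (f : L -> L') : is_cofrm_mor f ->
  forall a b, le a b -> le (f a) (f b).
Proof.
  intros [_ [_ Hs]] a b H.
  assert (E : sup2 a b = b) by
    (apply le_antisym; [apply sup2_lub; [exact H | apply le_refl] | apply sup2_ub_r]).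
  rewrite <- E, Hs. apply sup2_ub_l.
Qed.

Lemma mor_meet2 (L L' : coframe) (f : L -> L') : is_cofrm_mor f ->
  forall a b, f (meet2 a b) = meet2 (f a) (f b).
Proof.
  intros [Hi _] a b. unfold meet2. rewrite Hi. apply inf_ext. intros y; split.
  - intros [x [[-> | ->] ->]]; [left|right]; reflexivity.
  - intros [-> | ->]; [exists a|exists b]; split; auto.
Qed.

Lemma mor_top (L L' : coframe) (f : L -> L') : is_cofrm_mor f ->
  f (top L) = top L'.
Proof.
  intros [Hi _]. unfold top. rewrite Hi. apply inf_ext. intros y; split.
  - intros [x [[] _]].
  - intros [].
Qed.

Lemma le_top (L : coframe) (x : L) : le x (top L).
Proof. apply inf_glb. intros _ []. Qed.

Lemma preim_filter (L L' : coframe) (f : L -> L') (F : L' -> Prop) :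
  is_cofrm_mor f -> is_filter F -> is_filter (preim f F).
Proof.
  intros Hf [[x Hx] [Hup Hm]]. unfold preim. split; [|split].
  - exists (top L). rewrite (mor_top Hf). eapply Hup; [exact Hx | apply le_top].
  - intros a b Ha Hab. eapply Hup; [exact Ha | apply (mor_mono Hf); exact Hab].
  - intros a b Ha Hb. rewrite (mor_meet2 Hf). apply Hm; assumption.
Qed.

Lemma mor_compl (L L' : coframe) (f : L -> L') (a : L) :
  is_cofrm_mor f -> complemented a -> complemented (f a).
Proof.
  intros Hf [b [H1 H2]]. exists (f b). split.
  - rewrite <- (mor_meet2 Hf), H1. apply (proj1 (proj2 Hf)).
  - destruct Hf as [Hi [Hb Hs]]. rewrite <- Hs, H2. apply (mor_top (conj Hi (conj Hb Hs))).
Qed.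

Unset Implicit Arguments.
Section S.
Variables (C : cofcat) (L : coframe) (I : Type) (Li : I -> coframe)
  (limi : forall i, (Li i -> Prop) -> Li i) (phi : forall i, Li i -> L).
Hypotheses (HL : ob C L) (Hconv : forall i, is_conv (limi i))
  (Hphi : forall i, mor C (phi i)).

Lemma fl_lift : is_lift limi phi (final_lim limi phi).
Proof.
  split.
  - intros F G HF HG HFG. apply inf_glb. intros x [i ->].
    eapply le_trans; [apply inf_lb; exists i; reflexivity|].
    apply (mor_mono (mor_cofrm (Hphi i))). apply Hconv.
    + apply preim_filter; [apply (mor_cofrm (Hphi i)) | exact HF].
    + apply preim_filter; [apply (mor_cofrm (Hphi i)) | exact HG].
    + intros x. unfold preim. apply HFG.
  - intros i F HF. apply inf_lb. exists i. reflexivity.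
Qed.

Lemma lift_final P lim : is_lift limi phi lim -> is_final limi phi C P lim.
Proof.
  intros [Hc Hl] L' lim' _ _ _ psi Hpsi. pose proof (mor_cofrm Hpsi) as Hp. split.
  - intros Hcont i F HF. eapply le_trans; [apply Hcont; exact HF|].
    apply (mor_mono Hp). apply Hl. apply preim_filter; assumption.
  - intros H F HF.
Abort.

Lemma fl_final P : is_final limi phi C P (final_lim limi phi).
Proof.
  intros L' lim' _ _ _ psi Hpsi. pose proof (mor_cofrm Hpsi) as Hp. split.
  - intros Hcont i F HF. eapply le_trans; [apply Hcont; exact HF|].
    apply (mor_mono Hp). apply (proj2 fl_lift). apply preim_filter; assumption.
  - intros H F HF. unfold final_lim. rewrite (proj1 Hp). apply inf_glb.
    intros y [x [[i ->] ->]]. apply (H i F HF).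
Qed.

Lemma fl_unique P : P L (final_lim limi phi) ->
  forall lim, is_lift limi phi lim -> is_final limi phi C P lim ->
    forall F, is_filter F -> lim F = final_lim limi phi F.
Proof.
  intros HP lim [Hc Hl] Hf F HF. apply le_antisym.
  - apply inf_glb. intros x [i ->]. apply Hl. exact HF.
  - pose proof (Hf L (final_lim limi phi) HL (proj1 fl_lift) HP (fun x => x)
      (@mor_id C L HL)) as [_ H]. apply H; [|exact HF].
    intros i. apply (proj2 fl_lift).
Qed.

Lemma fl_classical : (forall i, classical (limi i)) -> classical (final_lim limi phi).
Proof.
  intros Hcl F G HF HG HFG. unfold final_lim. apply inf_ext. intros x.
  assert (E : forall i, limi i (preim (phi i) F) = limi i (preim (phi i) G)).
  { intros i. pose proof (mor_cofrm (Hphi i)) as Hp. apply Hcl.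
    - apply preim_filter; assumption.
    - apply preim_filter; assumption.
    - intros a Ha. unfold preim. apply HFG. apply mor_compl; assumption. }
  split; intros [i ->]; exists i; rewrite E; reflexivity.
Qed.
End S.

Theorem mainTheorem7 (C : cofcat) (L : coframe) (I : Type) (Li : I -> coframe)
  (limi : forall i, (Li i -> Prop) -> Li i) (phi : forall i, Li i -> L) :
  ob C L -> (forall i, ob C (Li i)) -> (forall i, is_conv (limi i)) ->
  (forall i, mor C (phi i)) ->
  (* the sink has a unique final lift in C^conv, given by final_lim *)
  (is_lift limi phi (final_lim limi phi) /\
   is_final limi phi C trueP (final_lim limi phi) /\
   (forall lim, is_lift limi phi lim -> is_final limi phi C trueP lim ->
      forall F, is_filter F -> lim F = final_lim limi phi F)) /\
  (* the same in the full subcategory of classical convergence objects *)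
  ((forall i, classical (limi i)) ->
   classical (final_lim limi phi) /\
   is_lift limi phi (final_lim limi phi) /\
   is_final limi phi C (@classical) (final_lim limi phi) /\
   (forall lim, classical lim -> is_lift limi phi lim ->
      is_final limi phi C (@classical) lim ->
      forall F, is_filter F -> lim F = final_lim limi phi F)).
Proof.
  intros HL _ Hconv Hphi. split.
  - split; [eapply fl_lift; eassumption|]. split; [eapply fl_final; eassumption|].
    eapply fl_unique; try eassumption. exact Logic.I.
  - intros Hcl. split; [eapply fl_classical; eassumption|].
    split; [eapply fl_lift; eassumption|]. split; [eapply fl_final; eassumption|].
    intros lim _. eapply fl_unique; try eassumption. eapply fl_classical; eassumption.
Qed.
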